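(* For every $n\ge 3$, the strong metric dimension of the convex polytope graph $S_n$ satisfies $sdim(S_n)=n$ if $n$ is odd and $sdim(S_n)=\frac{3n}{2}$ if $n$ is even.
   Context: For $n\ge 3$, $S_n$ is the graph with vertex set $\{a_i,b_i,c_i,d_i : 1\le i\le n\}$ and edge set $\{a_ia_{i+1}, b_ib_{i+1}, c_ic_{i+1}, d_id_{i+1}, a_{i+1}b_i, a_ib_i, b_ic_i, c_id_i : 1\le i\le n\}$, indices taken modulo $n$. $d(u,v)$ is the graph distance. A vertex $w$ strongly resolves distinct vertices $u,v$ if $d(v,w)=d(v,u)+d(u,w)$ or $d(u,w)=d(u,v)+d(v,w)$. A set $S$ of vertices is a strong resolving set if every two distinct vertices are strongly resolved by some vertex of $S$; $sdim(G)$ is the minimum cardinality of a strong resolving set of $G$. *)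

(* Defs.v *)
From mathcomp Require Import all_boot.
Set Implicit Arguments. Unset Strict Implicit. Unset Printing Implicit Defensive.

Section GraphDist.
Variables (T : finType) (adj : rel T).

Definition walk_of_len (k : nat) (u v : T) : bool :=
  [exists p : k.-tuple T, path adj u p && (last u p == v)].

(* A shortest walk
   (if any) has length < #|T|; the default #|T| is only reached for
   disconnected pairs, which do not occur in the (connected) graphs S_n. *)
Definition gdist (u v : T) : nat :=
  \big[minn/#|T|]_(k < #|T| | walk_of_len k u v) k.

Definition strongly_resolves (w u v : T) : bool :=
  (gdist v w == gdist v u + gdist u w) || (gdist u w == gdist u v + gdist v w).

Definition strong_resolving_set (S : {set T}) : bool :=
  [forall u, forall v, (u != v) ==> [exists w in S, strongly_resolves w u v]].

(* strong metric dimension: min cardinality of a strong resolving set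
   (setT is always one, so the default #|T| is harmless). *)
Definition sdim : nat :=
  \big[minn/#|T|]_(S : {set T} | strong_resolving_set S) #|S|.

End GraphDist.

(* The convex polytope graph S_n: vertex (k, i) with k : 'I_4 encodes
   k = 0 -> a_i, 1 -> b_i, 2 -> c_i, 3 -> d_i; indices i : 'I_n (mod n). *)
Definition Sn_vert (n : nat) : finType := ('I_4 * 'I_n)%type.

Definition Sn_edge0 (n : nat) (u v : Sn_vert n) : bool :=
  let: (k, i) := u in let: (l, j) := v in
  [|| (k == l) && (val j == (val i).+1 %% n)                   (* x_i x_{i+1}, x in {a,b,c,d} *)
    , [&& val k == 0, val l == 1 & val i == (val j).+1 %% n]    (* a_{i+1} b_i *)
    | (val l == (val k).+1) && (i == j) ].                      (* a_i b_i, b_i c_i, c_i d_i *)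

Definition Sn_adj (n : nat) : rel (Sn_vert n) :=
  fun u v => Sn_edge0 u v || Sn_edge0 v u.

(* Main.v *)
Require Import Defs.
From mathcomp Require Import all_boot.
From mathcomp Require Import zify.
Set Implicit Arguments. Unset Strict Implicit. Unset Printing Implicit Defensive.

Definition Hh (k : 'I_4) : nat := match val k with 0 => 1 | 1 => 2 | 2 => 4 | _ => 6 end.
Definition Pp n (u : Sn_vert n) : nat := 2 * val u.2 + (val u.1 != 0).
Definition absd a b := (a - b) + (b - a).
Definition c2 N x y := minn (absd x y) (N - absd x y).
Definition dd n (u v : Sn_vert n) :=
  (absd (Hh u.1) (Hh v.1) + c2 (2*n) (Pp u) (Pp v)) %/ 2.

Lemma walk_lb (T : finType) (adj : rel T) (f : T -> T -> nat) u :
  (forall v w, adj w v -> f u v <= (f u w).+1) -> f u u = 0 ->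
  forall p, path adj u p -> f u (last u p) <= size p.
Proof.
move=> Hadj H0; elim/last_ind => [|p z IH] /=; first by rewrite H0.
rewrite rcons_path last_rcons size_rcons => /andP[/IH Hp Ha].
exact: leq_trans (Hadj _ _ Ha) _.
Qed.

Lemma walk_ub (T : finType) (adj : rel T) (f : T -> T -> nat) u :
  f u u = 0 ->
  (forall v, v != u -> exists w, adj w v /\ (f u w).+1 = f u v) ->
  forall k v, f u v = k -> exists p, [/\ size p = k, path adj u p & last u p = v].
Proof.
move=> H0 Hdesc; elim=> [|k IH] v Hv.
  exists [::]; split=> //; case: (eqVneq v u) => [->//|/Hdesc [w [_ Hw]]].
  by rewrite Hv in Hw.
case: (eqVneq v u) => [Evu|/Hdesc [w [Hwv Hw]]].
  by subst; rewrite H0 in Hv.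
rewrite Hv in Hw; case: Hw => Hw.
have [p [Hs Hp Hl]] := IH w Hw.
exists (rcons p v); rewrite size_rcons rcons_path last_rcons Hs Hp Hl Hwv.
by split.
Qed.

Lemma bigmin_le (I : eqType) (r : seq I) (P : pred I) (F : I -> nat) idx i0 :
  i0 \in r -> P i0 -> \big[minn/idx]_(i <- r | P i) F i <= F i0.
Proof.
elim: r => // i r IH; rewrite inE big_cons => /predU1P [<- ->|Hr HP].
  exact: geq_minl.
case: ifP => _; last exact: IH.
by rewrite geq_min IH ?orbT.
Qed.

Lemma gdist_eq (T : finType) (adj : rel T) (f : T -> T -> nat) u :
  (forall v w, adj w v -> f u v <= (f u w).+1) -> f u u = 0 ->
  (forall v, v != u -> exists w, adj w v /\ (f u w).+1 = f u v) ->
  forall v, f u v < #|T| -> gdist adj u v = f u v.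
Proof.
move=> H1 H0 H2 v Hlt; rewrite /gdist.
have Hw : walk_of_len adj (Ordinal Hlt) u v.
  have [p [Hs Hp Hl]] := walk_ub H0 H2 (erefl (f u v)).
  apply/existsP; exists (@Tuple _ _ p (introT eqP Hs)); by rewrite /= Hp Hl eqxx.
apply/eqP; rewrite eqn_leq; apply/andP; split.
  by have := @bigmin_le _ (index_enum 'I_#|T|) (fun k => walk_of_len adj k u v) (fun k => val k) #|T| (Ordinal Hlt) (mem_index_enum _) Hw.
apply: (big_ind (fun x => f u v <= x)) => //.
- exact: ltnW.
- by move=> x y; rewrite leq_min => -> ->.
- move=> k Hk; case/existsP: Hk => p /andP[Hp /eqP Hl].
  by have := walk_lb H1 H0 Hp; rewrite Hl size_tuple.
Qed.

Definition MMD (T : finType) (adj : rel T) (x y : T) :=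
  x != y /\ (forall z, adj z y -> gdist adj x z <= gdist adj x y) /\
  (forall z, adj z x -> gdist adj y z <= gdist adj x y).

Definition metricP (T : finType) (adj : rel T) :=
  [/\ (forall a b, adj a b = adj b a),
      (forall u, gdist adj u u = 0),
      (forall u v, gdist adj u v = gdist adj v u),
      (forall u v w, adj w v -> gdist adj u v <= (gdist adj u w).+1) &
      (forall u v, v != u -> exists w, adj w v /\ (gdist adj u w).+1 = gdist adj u v)].

Lemma tri (T : finType) (adj : rel T) : metricP adj ->
  forall u v w, gdist adj u v <= gdist adj u w + gdist adj w v.
Proof.
case=> _ H0 _ H1 H2 u v w.
move: {2}(gdist adj w v) (erefl (gdist adj w v)) => k.
elim: k v => [|k IH] v Hk.
  case: (eqVneq v w) => [->|/H2 [z [_ Hz]]]; first by rewrite H0 addn0.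
  by rewrite Hk in Hz.
case: (eqVneq v w) => [E|/H2 [z [Hzv Hz]]].
  by subst; rewrite H0 in Hk.
rewrite Hk in Hz; case: Hz => Hz.
have := IH z Hz; have := H1 u v z Hzv; lia.
Qed.

Lemma cover_of_srs (T : finType) (adj : rel T) (S : {set T}) x y : metricP adj ->
  strong_resolving_set adj S -> MMD adj x y -> x \in S \/ y \in S.
Proof.
move=> HM; have Htri := tri HM; case: HM => Hsa H0 Hs H1 H2.
move=> /forallP /(_ x) /forallP /(_ y) H [Hxy [Hy Hx]].
move: H; rewrite Hxy /= => /existsP [w /andP [wS Hw]].
case: (eqVneq w x) => [Ewx|wx]; first by left; rewrite -Ewx.
case: (eqVneq w y) => [E|wy]; first by right; rewrite -E.
exfalso; move: Hw; rewrite /strongly_resolves => /orP [/eqP E|/eqP E].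
- have [z [Hzx Hz]] := H2 w x (ltac:(by rewrite eq_sym)).
  have := Htri y w z; have := Hx z Hzx; rewrite (Hs z w) (Hs x w) (Hs y x) in E *.
  lia.
- have [z [Hzy Hz]] := H2 w y (ltac:(by rewrite eq_sym)).
  have := Htri x w z; have := Hy z Hzy; rewrite (Hs z w) (Hs y w) in E *.
  lia.
Qed.

Lemma srs_of_cover (T : finType) (adj : rel T) (S : {set T}) : metricP adj ->
  (forall x y, MMD adj x y -> x \in S \/ y \in S) -> strong_resolving_set adj S.
Proof.
move=> HM Hc; have Htri := tri HM; case: HM => Hsa H0 Hs H1 H2.
apply/forallP=> u; apply/forallP => v; apply/implyP => Huv.
pose P1 := fun w => gdist adj v w == gdist adj v u + gdist adj u w.
have P1u : P1 u by rewrite /P1 H0 addn0.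
case: (@arg_maxnP _ u P1 (fun w => gdist adj v w) P1u) => x /eqP Px Hmx.
pose P2 := fun w => gdist adj x w == gdist adj x v + gdist adj v w.
have P2v : P2 v by rewrite /P2 H0 addn0.
case: (@arg_maxnP _ v P2 (fun w => gdist adj x w) P2v) => y /eqP Py Hmy.
have Hvu : 0 < gdist adj v u.
  have [z [_ Hz]] := H2 v u Huv; lia.
have Hxy : MMD adj x y.
  split; [|split].
  - apply/eqP => Exy; subst y; move: Py; rewrite H0 (Hs x v) Px; lia.
  - move=> z Hzy; rewrite leqNgt; apply/negP => Hlt.
    have Hz1 := H1 x z y (ltac:(by rewrite Hsa)).
    have Hz2 := Htri x z v; have Hz3 := H1 v z y (ltac:(by rewrite Hsa)).
    have : P2 z by rewrite /P2; apply/eqP; lia.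
    move/Hmy; lia.
  - move=> z Hzx; rewrite leqNgt; apply/negP => Hlt.
    have Hz1 := H1 y z x (ltac:(by rewrite Hsa)).
    have Hz2 := Htri y z v; have Hz3 := H1 v z x (ltac:(by rewrite Hsa)).
    have Hz4 := Htri v z u; have Hz5 := H1 u z x (ltac:(by rewrite Hsa)).
    have E1 := Hs x y; have E2 := Hs x v; have E3 := Hs y v.
    have : P1 z by rewrite /P1; apply/eqP; lia.
    move/Hmx; lia.
have Hrx : strongly_resolves adj x u v by rewrite /strongly_resolves Px eqxx.
have Hry : strongly_resolves adj y u v.
  rewrite /strongly_resolves; apply/orP; right; apply/eqP.
  have := Htri x y u; have := Htri u y v; have := Htri u v y.
  have E1 := Hs x v; have E2 := Hs u x; have E3 := Hs u v; lia.
by case: (Hc x y Hxy) => HS; apply/existsP; [exists x|exists y]; rewrite HS.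
Qed.

Lemma sdim_eq (T : finType) (adj : rel T) (S0 : {set T}) m (x y : 'I_m -> T) :
  metricP adj -> strong_resolving_set adj S0 -> #|S0| = m ->
  injective x -> injective y -> (forall t s, x t != y s) ->
  (forall t, MMD adj (x t) (y t)) -> sdim adj = m.
Proof.
move=> HM HS0 Hc xi yi Hd Hm; apply/eqP; rewrite eqn_leq; apply/andP; split.
  by rewrite /sdim -Hc; apply: bigmin_le => //; exact: mem_index_enum.
apply: (big_ind (fun k => m <= k)).
- by rewrite -Hc; exact: max_card.
- by move=> a b Ha Hb; rewrite leq_min Ha Hb.
move=> S HS.
pose h t := if x t \in S then x t else y t.
have hinj : injective h.
  move=> t s; rewrite /h; case: ifP => _; case: ifP => _ E.
  - exact: xi.
  - by move: (Hd t s); rewrite E eqxx.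
  - by move: (Hd s t); rewrite E eqxx.
  - exact: yi.
have hS : h @: setT \subset S.
  apply/subsetP => z /imsetP [t _ ->]; rewrite /h.
  by case: ifP => // /negbT Hn; case: (cover_of_srs HM HS (Hm t)) => //; rewrite (negbTE Hn).
by have := subset_leq_card hS; rewrite card_imset // cardsT card_ord.
Qed.

Lemma modS n i : i < n -> (i.+1 %% n = i.+1 /\ i.+1 < n) \/ (i.+1 %% n = 0 /\ i.+1 = n).
Proof.
move=> Hi; case: (ltngtP i.+1 n) => H.
- by left; rewrite modn_small.
- lia.
- by right; rewrite H modnn.
Qed.

Lemma ord_eqE n i j (Hi : i < n) (Hj : j < n) : (Ordinal Hi == Ordinal Hj) = (i == j).
Proof. by []. Qed.

Lemma step_raw n (w v : Sn_vert n) : 3 <= n -> Sn_edge0 w v ->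
  absd (Hh w.1) (Hh v.1) + c2 (2*n) (Pp w) (Pp v) <= 2.
Proof.
move=> Hn.
case: w => [[[|[|[|[|k]]]] Hk] [i Hi]]; try (exfalso; lia);
case: v => [[[|[|[|[|l]]]] Hl] [j Hj]]; try (exfalso; lia);
rewrite /Sn_edge0 /Pp /Hh /c2 /absd /= ?ord_eqE;
move: (modS Hi) (modS Hj); move: (i.+1 %% n) (j.+1 %% n) => a b; lia.
Qed.

Arguments Pp : simpl never.
Arguments c2 : simpl never.

Definition Aa n (u v : Sn_vert n) := absd (Hh u.1) (Hh v.1) + c2 (2*n) (Pp u) (Pp v).

Lemma A_even n (u v : Sn_vert n) : 3 <= n -> Aa u v = 2 * dd u v.
Proof.
move=> Hn; rewrite /dd -/(Aa u v).
case: u => [[[|[|[|[|k]]]] Hk] [i Hi]]; try (exfalso; lia);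
case: v => [[[|[|[|[|l]]]] Hl] [j Hj]]; try (exfalso; lia);
rewrite /Aa /Pp /Hh /c2 /absd /=; lia.
Qed.

Lemma c2_tri N x y z : x < N -> y < N -> z < N -> c2 N x z <= c2 N x y + c2 N y z.
Proof. rewrite /c2 /absd; lia. Qed.

Lemma c2_sym N x y : c2 N x y = c2 N y x.
Proof. rewrite /c2 /absd; lia. Qed.

Lemma absd_sym x y : absd x y = absd y x.
Proof. rewrite /absd; lia. Qed.

Lemma absd_tri x y z : absd x z <= absd x y + absd y z.
Proof. rewrite /absd; lia. Qed.

Lemma Pp_lt n (u : Sn_vert n) : Pp u < 2 * n.
Proof. case: u => k [i Hi]; rewrite /Pp /=; have : (val k != 0) <= 1 by case: (_ != _). lia. Qed.

Lemma A_sym n (u v : Sn_vert n) : Aa u v = Aa v u.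
Proof. by rewrite /Aa absd_sym c2_sym. Qed.

Lemma A_tri n (u v w : Sn_vert n) : Aa u v <= Aa u w + Aa w v.
Proof.
rewrite /Aa; have := absd_tri (Hh u.1) (Hh w.1) (Hh v.1).
have := c2_tri (Pp_lt u) (Pp_lt w) (Pp_lt v); lia.
Qed.

Lemma dd_step n (u v w : Sn_vert n) : 3 <= n -> Sn_adj w v -> dd u v <= (dd u w).+1.
Proof.
move=> Hn Hwv.
have H2 : Aa w v <= 2.
  case/orP: Hwv => H; [exact: step_raw|by rewrite A_sym; exact: step_raw].
move: H2; have := A_tri u v w; rewrite !A_even //; lia.
Qed.

Lemma ord_pos n (i : 'I_n) : 0 < n.
Proof. by case: i => i Hi; apply: leq_ltn_trans Hi. Qed.

Definition nxt n (i : 'I_n) : 'I_n := Ordinal (ltn_pmod i.+1 (ord_pos i)).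
Definition prv n (i : 'I_n) : 'I_n := Ordinal (ltn_pmod (i + n.-1) (ord_pos i)).

Lemma prvE n j : j < n -> (0 < j /\ (j + n.-1) %% n = j.-1) \/ (j = 0 /\ (j + n.-1) %% n = n.-1).
Proof.
move=> Hj; case: j Hj => [|j] Hj.
  by right; split => //; rewrite add0n modn_small // prednK //; lia.
left; split => //.
have -> : j.+1 + n.-1 = j + n by lia.
by rewrite -modnDmr modnn addn0 modn_small //; lia.
Qed.

Lemma prvS n (j : 'I_n) : (val (prv j)).+1 %% n = val j.
Proof.
case: j => j Hj /=; case: (prvE Hj) => [[H ->]|[-> ->]].
  by rewrite prednK // modn_small.
by rewrite prednK ?modnn //; lia.
Qed.

Lemma adj_sym n (u v : Sn_vert n) : Sn_adj u v = Sn_adj v u.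
Proof. by rewrite /Sn_adj orbC. Qed.

Lemma adj_nxt n (k : 'I_4) (j : 'I_n) : Sn_adj (k, nxt j) (k, j).
Proof. by rewrite /Sn_adj /Sn_edge0 eqxx /= eqxx orbT. Qed.

Lemma adj_prv n (k : 'I_4) (j : 'I_n) : Sn_adj (k, prv j) (k, j).
Proof. by rewrite /Sn_adj /Sn_edge0 eqxx /= prvS eqxx. Qed.

Lemma adj_up n (k l : 'I_4) (j : 'I_n) : val l = (val k).+1 -> Sn_adj (k, j) (l, j).
Proof. by move=> H; rewrite /Sn_adj /Sn_edge0 H !eqxx /= !orbT. Qed.

Lemma adj_ab n (j : 'I_n) (H0 : 0 < 4) (H1 : 1 < 4) : Sn_adj (Ordinal H0, nxt j) (Ordinal H1, j).
Proof. by rewrite /Sn_adj /Sn_edge0 /= eqxx. Qed.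

Lemma adj_ba n (j : 'I_n) (H0 : 0 < 4) (H1 : 1 < 4) : Sn_adj (Ordinal H1, prv j) (Ordinal H0, j).
Proof. by rewrite /Sn_adj /Sn_edge0 /=; have := prvS j; rewrite /= => ->; rewrite eqxx. Qed.

Lemma c2_char N x y : x < N -> y < N -> exists d, d < N /\ (x + d = y \/ y + d = x) /\
  ((c2 N x y = d /\ 2*d <= N) \/ (c2 N x y + d = N /\ N < 2*d)).
Proof. move=> Hx Hy; exists (absd x y); rewrite /c2 /absd; lia. Qed.
Lemma c2_step N x y s zp zm : x < N -> y < N -> zp < N -> zm < N -> 0 < s -> 2*s <= N ->
  (zp = y + s \/ zp + N = y + s) -> (zm + s = y \/ zm + s = y + N) -> s <= c2 N x y ->
  c2 N x zp + s = c2 N x y \/ c2 N x zm + s = c2 N x y.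
Proof.
move=> Hx Hy Hp Hm H1 H2 H3 H4 H5.
have [d1 [A1 [B1 C1]]] := c2_char Hx Hy.
have [d2 [A2 [B2 C2]]] := c2_char Hx Hp.
have [d3 [A3 [B3 C3]]] := c2_char Hx Hm.
move: H5 C1 C2 C3; move: (c2 N x y) (c2 N x zp) (c2 N x zm) => c c' c''.
lia.
Qed.

Lemma Pp_nxt n (k : 'I_4) (j : 'I_n) : Pp (k, nxt j) = Pp (k, j) + 2 \/ Pp (k, nxt j) + 2 * n = Pp (k, j) + 2.
Proof. rewrite /Pp /=; case: j => jj Hj /=; case: (modS Hj) => [[-> _]|[-> ?]]; lia. Qed.

Lemma Pp_prv n (k : 'I_4) (j : 'I_n) : Pp (k, prv j) + 2 = Pp (k, j) \/ Pp (k, prv j) + 2 = Pp (k, j) + 2 * n.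
Proof. rewrite /Pp /=; case: j => jj Hj /=; case: (prvE Hj) => [[? ->]|[-> ->]]; lia. Qed.

Lemma Pp_ab n (k l : 'I_4) (j : 'I_n) : val k = 0 -> val l = 1 -> Pp (l, j) = Pp (k, j) + 1.
Proof. by rewrite /Pp /= => -> ->; rewrite addn0. Qed.

Lemma Pp_anxt n (k l : 'I_4) (j : 'I_n) : val k = 0 -> val l = 1 ->
  Pp (k, nxt j) = Pp (l,j) + 1 \/ Pp (k, nxt j) + 2 * n = Pp (l, j) + 1.
Proof. rewrite /Pp /= => -> ->; case: j => jj Hj /=; case: (modS Hj) => [[-> _]|[-> ?]]; lia. Qed.

Lemma Pp_bprv n (k l : 'I_4) (j : 'I_n) : val k = 0 -> val l = 1 ->
  Pp (l, prv j) + 1 = Pp (k, j) \/ Pp (l, prv j) + 1 = Pp (k,j) + 2 * n.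
Proof. rewrite /Pp /= => -> ->; case: j => jj Hj /=; case: (prvE Hj) => [[? ->]|[-> ->]]; lia. Qed.

Lemma Pp_same n (k l : 'I_4) (j : 'I_n) : val k != 0 -> val l != 0 -> Pp (k, j) = Pp (l, j).
Proof. by rewrite /Pp /= => -> ->. Qed.

Lemma c2_lb_same n (u v : Sn_vert n) : u.1 = v.1 -> u != v -> 2 <= c2 (2*n) (Pp u) (Pp v).
Proof.
case: u v => [k [i Hi]] [l [j Hj]] /= <-; rewrite xpair_eqE eqxx /= ord_eqE => Hij.
have [d [A1 [B1 C1]]] := c2_char (Pp_lt (k, Ordinal Hi)) (Pp_lt (k, Ordinal Hj)).
move: C1 B1; rewrite /Pp /=; move: (c2 _ _ _) => c.
have : (val k != 0) <= 1 by case: (_ != _).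
lia.
Qed.

Lemma c2_lb_diff n (u v : Sn_vert n) : val u.1 = 0 -> val v.1 != 0 -> 1 <= c2 (2*n) (Pp u) (Pp v).
Proof.
case: u v => [k [i Hi]] [l [j Hj]] /= Hk Hl.
have [d [A1 [B1 C1]]] := c2_char (Pp_lt (k, Ordinal Hi)) (Pp_lt (l, Ordinal Hj)).
move: C1 B1; rewrite /Pp /= Hk (negbTE Hl) /=; move: (c2 _ _ _) => c.
lia.
Qed.

Ltac gen_c2 := repeat match goal with |- context [c2 ?N ?x ?y] => let c := fresh "c" in move: (c2 N x y) => c end.

Lemma descA n (u v : Sn_vert n) : 3 <= n -> v != u ->
  exists w, Sn_adj w v /\ Aa u w + 2 = Aa u v.
Proof.
move=> Hn; case: v => l j; case: u => k ui.
have HN : 2 * 2 <= 2 * n by lia.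
have Hx := Pp_lt (k, ui).
case: l => [[|[|[|[|l]]]] Hl]; try (exfalso; lia);
case: k Hx => [[|[|[|[|k]]]] Hk] Hx; try (exfalso; lia); move=> Hvu.
- have Hlb := @c2_lb_same n (Ordinal Hk, ui) (Ordinal Hl, j) (ltac:(by apply: val_inj)) (ltac:(by rewrite eq_sym)).
  have [E|E] := c2_step Hx (Pp_lt _) (Pp_lt _) (Pp_lt _) (isT : 0 < 2) HN (Pp_nxt (Ordinal Hl) j) (Pp_prv (Ordinal Hl) j) Hlb.
    by exists (Ordinal Hl, nxt j); split; [exact: adj_nxt|move: E; rewrite /Aa /Hh /absd /=; gen_c2; lia].
  by exists (Ordinal Hl, prv j); split; [exact: adj_prv|move: E; rewrite /Aa /Hh /absd /=; gen_c2; lia].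
- have Hlb : 1 <= c2 (2*n) (Pp (Ordinal Hk, ui)) (Pp (Ordinal Hl, j)).
    by rewrite c2_sym; apply: c2_lb_diff.
  have [E|E] := c2_step Hx (Pp_lt _) (Pp_lt (Ordinal (isT : 1 < 4), j)) (Pp_lt (Ordinal (isT : 1 < 4), prv j)) (isT : 0 < 1) (ltac:(lia)) (or_introl (Pp_ab j (erefl : val (Ordinal Hl) = 0) (erefl : val (Ordinal (isT : 1 < 4)) = 1))) (Pp_bprv j (erefl : val (Ordinal Hl) = 0) (erefl : val (Ordinal (isT : 1 < 4)) = 1)) Hlb.
    by exists (Ordinal (isT : 1 < 4), j); split; [rewrite adj_sym; apply: adj_up|move: E; rewrite /Aa /Hh /absd /=; gen_c2; lia].
  by exists (Ordinal (isT : 1 < 4), prv j); split; [apply: adj_ba|move: E; rewrite /Aa /Hh /absd /=; gen_c2; lia].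
- have Hlb : 1 <= c2 (2*n) (Pp (Ordinal Hk, ui)) (Pp (Ordinal Hl, j)).
    by rewrite c2_sym; apply: c2_lb_diff.
  have [E|E] := c2_step Hx (Pp_lt _) (Pp_lt (Ordinal (isT : 1 < 4), j)) (Pp_lt (Ordinal (isT : 1 < 4), prv j)) (isT : 0 < 1) (ltac:(lia)) (or_introl (Pp_ab j (erefl : val (Ordinal Hl) = 0) (erefl : val (Ordinal (isT : 1 < 4)) = 1))) (Pp_bprv j (erefl : val (Ordinal Hl) = 0) (erefl : val (Ordinal (isT : 1 < 4)) = 1)) Hlb.
    by exists (Ordinal (isT : 1 < 4), j); split; [rewrite adj_sym; apply: adj_up|move: E; rewrite /Aa /Hh /absd /=; gen_c2; lia].
  by exists (Ordinal (isT : 1 < 4), prv j); split; [apply: adj_ba|move: E; rewrite /Aa /Hh /absd /=; gen_c2; lia].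
- have Hlb : 1 <= c2 (2*n) (Pp (Ordinal Hk, ui)) (Pp (Ordinal Hl, j)).
    by rewrite c2_sym; apply: c2_lb_diff.
  have [E|E] := c2_step Hx (Pp_lt _) (Pp_lt (Ordinal (isT : 1 < 4), j)) (Pp_lt (Ordinal (isT : 1 < 4), prv j)) (isT : 0 < 1) (ltac:(lia)) (or_introl (Pp_ab j (erefl : val (Ordinal Hl) = 0) (erefl : val (Ordinal (isT : 1 < 4)) = 1))) (Pp_bprv j (erefl : val (Ordinal Hl) = 0) (erefl : val (Ordinal (isT : 1 < 4)) = 1)) Hlb.
    by exists (Ordinal (isT : 1 < 4), j); split; [rewrite adj_sym; apply: adj_up|move: E; rewrite /Aa /Hh /absd /=; gen_c2; lia].
  by exists (Ordinal (isT : 1 < 4), prv j); split; [apply: adj_ba|move: E; rewrite /Aa /Hh /absd /=; gen_c2; lia].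
- have Hlb : 1 <= c2 (2*n) (Pp (Ordinal Hk, ui)) (Pp (Ordinal Hl, j)) by apply: c2_lb_diff.
  have Ea := Pp_ab j (erefl : val (Ordinal (isT : 0 < 4)) = 0) (erefl : val (Ordinal Hl) = 1).
  have [E|E] := c2_step Hx (Pp_lt _) (Pp_lt (Ordinal (isT : 0 < 4), nxt j)) (Pp_lt (Ordinal (isT : 0 < 4), j)) (isT : 0 < 1) (ltac:(lia)) (Pp_anxt j (erefl : val (Ordinal (isT : 0 < 4)) = 0) (erefl : val (Ordinal Hl) = 1)) (or_introl (esym Ea)) Hlb.
    by exists (Ordinal (isT : 0 < 4), nxt j); split; [apply: adj_ab|move: E; rewrite /Aa /Hh /absd /=; gen_c2; lia].
  by exists (Ordinal (isT : 0 < 4), j); split; [apply: adj_up|move: E; rewrite /Aa /Hh /absd /=; gen_c2; lia].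
- have Hlb := @c2_lb_same n (Ordinal Hk, ui) (Ordinal Hl, j) (ltac:(by apply: val_inj)) (ltac:(by rewrite eq_sym)).
  have [E|E] := c2_step Hx (Pp_lt _) (Pp_lt _) (Pp_lt _) (isT : 0 < 2) HN (Pp_nxt (Ordinal Hl) j) (Pp_prv (Ordinal Hl) j) Hlb.
    by exists (Ordinal Hl, nxt j); split; [exact: adj_nxt|move: E; rewrite /Aa /Hh /absd /=; gen_c2; lia].
  by exists (Ordinal Hl, prv j); split; [exact: adj_prv|move: E; rewrite /Aa /Hh /absd /=; gen_c2; lia].
- have E : Pp (Ordinal (isT : 2 < 4), j) = Pp (Ordinal Hl, j) by apply: Pp_same.
  exists (Ordinal (isT : 2 < 4), j); split; last by rewrite /Aa E /Hh /absd /=; gen_c2; lia.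
  by rewrite adj_sym; apply: adj_up.
- have E : Pp (Ordinal (isT : 2 < 4), j) = Pp (Ordinal Hl, j) by apply: Pp_same.
  exists (Ordinal (isT : 2 < 4), j); split; last by rewrite /Aa E /Hh /absd /=; gen_c2; lia.
  by rewrite adj_sym; apply: adj_up.
- have E : Pp (Ordinal (isT : 1 < 4), j) = Pp (Ordinal Hl, j) by apply: Pp_same.
  exists (Ordinal (isT : 1 < 4), j); split; last by rewrite /Aa E /Hh /absd /=; gen_c2; lia.
  by apply: adj_up.
- have E : Pp (Ordinal (isT : 1 < 4), j) = Pp (Ordinal Hl, j) by apply: Pp_same.
  exists (Ordinal (isT : 1 < 4), j); split; last by rewrite /Aa E /Hh /absd /=; gen_c2; lia.
  by apply: adj_up.
- have Hlb := @c2_lb_same n (Ordinal Hk, ui) (Ordinal Hl, j) (ltac:(by apply: val_inj)) (ltac:(by rewrite eq_sym)).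
  have [E|E] := c2_step Hx (Pp_lt _) (Pp_lt _) (Pp_lt _) (isT : 0 < 2) HN (Pp_nxt (Ordinal Hl) j) (Pp_prv (Ordinal Hl) j) Hlb.
    by exists (Ordinal Hl, nxt j); split; [exact: adj_nxt|move: E; rewrite /Aa /Hh /absd /=; gen_c2; lia].
  by exists (Ordinal Hl, prv j); split; [exact: adj_prv|move: E; rewrite /Aa /Hh /absd /=; gen_c2; lia].
- have E : Pp (Ordinal (isT : 3 < 4), j) = Pp (Ordinal Hl, j) by apply: Pp_same.
  exists (Ordinal (isT : 3 < 4), j); split; last by rewrite /Aa E /Hh /absd /=; gen_c2; lia.
  by rewrite adj_sym; apply: adj_up.
- have E : Pp (Ordinal (isT : 2 < 4), j) = Pp (Ordinal Hl, j) by apply: Pp_same.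
  exists (Ordinal (isT : 2 < 4), j); split; last by rewrite /Aa E /Hh /absd /=; gen_c2; lia.
  by apply: adj_up.
- have E : Pp (Ordinal (isT : 2 < 4), j) = Pp (Ordinal Hl, j) by apply: Pp_same.
  exists (Ordinal (isT : 2 < 4), j); split; last by rewrite /Aa E /Hh /absd /=; gen_c2; lia.
  by apply: adj_up.
- have E : Pp (Ordinal (isT : 2 < 4), j) = Pp (Ordinal Hl, j) by apply: Pp_same.
  exists (Ordinal (isT : 2 < 4), j); split; last by rewrite /Aa E /Hh /absd /=; gen_c2; lia.
  by apply: adj_up.
- have Hlb := @c2_lb_same n (Ordinal Hk, ui) (Ordinal Hl, j) (ltac:(by apply: val_inj)) (ltac:(by rewrite eq_sym)).
  have [E|E] := c2_step Hx (Pp_lt _) (Pp_lt _) (Pp_lt _) (isT : 0 < 2) HN (Pp_nxt (Ordinal Hl) j) (Pp_prv (Ordinal Hl) j) Hlb.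
    by exists (Ordinal Hl, nxt j); split; [exact: adj_nxt|move: E; rewrite /Aa /Hh /absd /=; gen_c2; lia].
  by exists (Ordinal Hl, prv j); split; [exact: adj_prv|move: E; rewrite /Aa /Hh /absd /=; gen_c2; lia].
Qed.

Lemma c2_le N x y : 2 * c2 N x y <= N.
Proof. rewrite /c2 /absd; lia. Qed.

Lemma Aa_self n (u : Sn_vert n) : Aa u u = 0.
Proof. rewrite /Aa /c2 /absd; lia. Qed.

Lemma Hh_bd (k : 'I_4) : 1 <= Hh k <= 6.
Proof. by case: k => [[|[|[|[|k]]]] Hk]. Qed.

Lemma card_Sn n : #|Sn_vert n| = 4 * n.
Proof. by rewrite /Sn_vert card_prod !card_ord. Qed.

Lemma gdist_Sn n (u v : Sn_vert n) : 3 <= n -> gdist (@Sn_adj n) u v = dd u v.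
Proof.
move=> Hn; apply: gdist_eq.
- by move=> v' w; apply: dd_step.
- by have := A_even u u Hn; rewrite Aa_self; lia.
- move=> v' Hv; have [w [Hw E]] := descA Hn Hv; exists w; split=> //.
  by move: E; rewrite !A_even //; lia.
- rewrite card_Sn; have := A_even u v Hn; rewrite /Aa.
  have := c2_le (2 * n) (Pp u) (Pp v); have := Hh_bd u.1; have := Hh_bd v.1.
  move: (c2 _ _ _) => c; rewrite /absd; lia.
Qed.

Lemma metric_Sn n : 3 <= n -> metricP (@Sn_adj n).
Proof.
move=> Hn; split.
- exact: adj_sym.
- by move=> u; rewrite gdist_Sn //; have := A_even u u Hn; rewrite Aa_self; lia.
- by move=> u v; rewrite !gdist_Sn //; have := A_even u v Hn; have := A_even v u Hn; rewrite A_sym; lia.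
- by move=> u v w Hw; rewrite !gdist_Sn //; apply: dd_step.
- move=> u v Hv; have [w [Hw E]] := descA Hn Hv; exists w; split=> //.
  by rewrite !gdist_Sn //; move: E; rewrite !A_even //; lia.
Qed.

Lemma MMD_sym (T : finType) (adj : rel T) x y : metricP adj -> MMD adj x y -> MMD adj y x.
Proof.
case=> _ _ Hs _ _ [Hxy [H1 H2]]; split; first by rewrite eq_sym.
by split=> z Hz; rewrite [gdist adj y x]Hs; [apply: H2|apply: H1].
Qed.

Lemma bump1 n (p q z : Sn_vert n) : 3 <= n -> Sn_adj z q -> Aa p z = Aa p q + 2 -> ~ MMD (@Sn_adj n) p q.
Proof.
move=> Hn Hz E [_ [H _]]; have := H z Hz; rewrite !gdist_Sn //.
by move: E; rewrite !A_even //; lia.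
Qed.

Lemma bump2 n (p q z : Sn_vert n) : 3 <= n -> Sn_adj z p -> Aa q z = Aa q p + 2 -> ~ MMD (@Sn_adj n) p q.
Proof.
move=> Hn Hz E [_ [_ H]]; have := H z Hz; rewrite !gdist_Sn //.
by rewrite (A_sym q p) in E; move: E; rewrite !A_even //; lia.
Qed.

Lemma c2_inc N x y s zp zm : x < N -> y < N -> zp < N -> zm < N -> 0 < s ->
  (zp = y + s \/ zp + N = y + s) -> (zm + s = y \/ zm + s = y + N) -> 2 * (c2 N x y + s) <= N ->
  c2 N x zp = c2 N x y + s \/ c2 N x zm = c2 N x y + s.
Proof.
move=> Hx Hy Hp Hm H1 H3 H4 H5.
have [d1 [A1 [B1 C1]]] := c2_char Hx Hy.
have [d2 [A2 [B2 C2]]] := c2_char Hx Hp.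
have [d3 [A3 [B3 C3]]] := c2_char Hx Hm.
move: H5 C1 C2 C3; move: (c2 N x y) (c2 N x zp) (c2 N x zm) => c c' c''.
lia.
Qed.

Lemma c2_odd_lt n (u v : Sn_vert n) : odd n -> val u.1 != 0 -> val v.1 != 0 -> c2 (2*n) (Pp u) (Pp v) < n.
Proof.
move=> Ho; have := odd_double_half n; rewrite Ho -muln2 /= => Hm.
case: u v => [k [i Hi]] [l [j Hj]] /= Hk Hl.
have [d [A1 [B1 C1]]] := c2_char (Pp_lt (k, Ordinal Hi)) (Pp_lt (l, Ordinal Hj)).
move: C1 B1; rewrite /Pp /= (negbTE Hk) (negbTE Hl) /=; move: (c2 _ _ _) => c.
move: Hm; move: n./2 => m; lia.
Qed.

Lemma c2_even_lt n (u v : Sn_vert n) : ~~ odd n -> val u.1 = 0 -> val v.1 != 0 -> c2 (2*n) (Pp u) (Pp v) < n.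
Proof.
move=> Ho; have := odd_double_half n; rewrite (negbTE Ho) -muln2 /= => Hm.
case: u v => [k [i Hi]] [l [j Hj]] /= Hk Hl.
have [d [A1 [B1 C1]]] := c2_char (Pp_lt (k, Ordinal Hi)) (Pp_lt (l, Ordinal Hj)).
move: C1 B1; rewrite /Pp /= Hk (negbTE Hl) /=; move: (c2 _ _ _) => c.
move: Hm; move: n./2 => m; lia.
Qed.

Lemma key_odd n (p q : Sn_vert n) : 3 <= n -> odd n -> val p.1 != 0 -> val q.1 != 0 ->
  Hh p.1 <= Hh q.1 -> ~ MMD (@Sn_adj n) p q.
Proof.
move=> Hn Ho; case: p => [[[|[|[|[|k]]]] Hk] i]; try (exfalso; lia); move=> //= _;
case: q => [[[|[|[|[|l]]]] Hl] j]; try (exfalso; lia); move=> //= _; rewrite /Hh /= => // _.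
-
  have E : Pp (Ordinal (isT : 2 < 4), j) = Pp (Ordinal Hl, j) by apply: Pp_same.
  apply: (@bump1 _ _ _ (Ordinal (isT : 2 < 4), j)) => //; first by rewrite adj_sym; apply: adj_up.
  by rewrite /Aa E /Hh /absd /=; gen_c2; lia.
-
  have E : Pp (Ordinal (isT : 3 < 4), j) = Pp (Ordinal Hl, j) by apply: Pp_same.
  apply: (@bump1 _ _ _ (Ordinal (isT : 3 < 4), j)) => //; first by rewrite adj_sym; apply: adj_up.
  by rewrite /Aa E /Hh /absd /=; gen_c2; lia.
-
  have Hc := @c2_odd_lt n (Ordinal Hl, j) (Ordinal Hk, i) Ho isT isT.
  have Ea := Pp_ab i (erefl : val (Ordinal (isT : 0 < 4)) = 0) (erefl : val (Ordinal Hk) = 1).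
  have [E|E] := c2_inc (Pp_lt (Ordinal Hl, j)) (Pp_lt (Ordinal Hk, i))
     (Pp_lt (Ordinal (isT : 0 < 4), nxt i)) (Pp_lt (Ordinal (isT : 0 < 4), i)) (isT : 0 < 1)
     (Pp_anxt i (erefl : val (Ordinal (isT : 0 < 4)) = 0) (erefl : val (Ordinal Hk) = 1))
     (or_introl (esym Ea)) (ltac:(lia)).
    apply: (@bump2 _ _ _ (Ordinal (isT : 0 < 4), nxt i)) => //; first by apply: adj_ab.
    by move: E; rewrite /Aa /Hh /absd /=; gen_c2; lia.
  apply: (@bump2 _ _ _ (Ordinal (isT : 0 < 4), i)) => //; first by apply: adj_up.
  by move: E; rewrite /Aa /Hh /absd /=; gen_c2; lia.
-
  have E : Pp (Ordinal (isT : 3 < 4), j) = Pp (Ordinal Hl, j) by apply: Pp_same.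
  apply: (@bump1 _ _ _ (Ordinal (isT : 3 < 4), j)) => //; first by rewrite adj_sym; apply: adj_up.
  by rewrite /Aa E /Hh /absd /=; gen_c2; lia.
-
  have E : Pp (Ordinal (isT : 1 < 4), i) = Pp (Ordinal Hk, i) by apply: Pp_same.
  apply: (@bump2 _ _ _ (Ordinal (isT : 1 < 4), i)) => //; first by apply: adj_up.
  by rewrite /Aa E /Hh /absd /=; gen_c2; lia.
-
  have E : Pp (Ordinal (isT : 2 < 4), j) = Pp (Ordinal Hl, j) by apply: Pp_same.
  apply: (@bump1 _ _ _ (Ordinal (isT : 2 < 4), j)) => //; first by apply: adj_up.
  by rewrite /Aa E /Hh /absd /=; gen_c2; lia.
Qed.

Lemma cover_odd n (p q : Sn_vert n) : 3 <= n -> odd n -> MMD (@Sn_adj n) p q ->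
  val p.1 = 0 \/ val q.1 = 0.
Proof.
move=> Hn Ho HM.
case: (eqVneq (val p.1) 0) => [|Hp]; first by left.
case: (eqVneq (val q.1) 0) => [|Hq]; first by right.
exfalso; case: (leqP (Hh p.1) (Hh q.1)) => H.
  exact: (key_odd Hn Ho Hp Hq H HM).
exact: (key_odd Hn Ho Hq Hp (ltnW H) (MMD_sym (metric_Sn Hn) HM)).
Qed.

Definition bad n (u : Sn_vert n) : bool :=
  [|| val u.1 == 1, val u.1 == 2 | (val u.1 == 0) && (n./2 <= val u.2)].

Lemma c2_le_absd N x y : c2 N x y <= absd x y.
Proof. rewrite /c2; exact: geq_minl. Qed.

Lemma key_even n (p q : Sn_vert n) : 3 <= n -> ~~ odd n -> bad p -> bad q -> p != q ->
  Hh p.1 <= Hh q.1 -> ~ MMD (@Sn_adj n) p q.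
Proof.
move=> Hn Ho; have := odd_double_half n; rewrite (negbTE Ho) -muln2 /= => Hm.
case: p => [[[|[|[|[|k]]]] Hk] [i Hi]]; try (exfalso; lia); rewrite /bad /= => Hbp;
case: q => [[[|[|[|[|l]]]] Hl] [j Hj]]; try (exfalso; lia); rewrite /= => Hbq //;
rewrite ?xpair_eqE /= ?ord_eqE /Hh /= => Hpq // _.
-
  have Hc : 2 * (c2 (2*n) (Pp (Ordinal Hk, Ordinal Hi)) (Pp (Ordinal Hl, Ordinal Hj)) + 1) <= 2 * n.
    have := c2_le_absd (2*n) (Pp (Ordinal Hk, Ordinal Hi)) (Pp (Ordinal Hl, Ordinal Hj)).
    move: Hbp Hbq Hpq; rewrite /Pp /absd /=; move: (c2 _ _ _) => c; move: Hm; move: n./2 => m; lia.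
  have Ea := Pp_ab (Ordinal Hj) (erefl : val (Ordinal Hl) = 0) (erefl : val (Ordinal (isT : 1 < 4)) = 1).
  have [E|E] := c2_inc (Pp_lt (Ordinal Hk, Ordinal Hi)) (Pp_lt (Ordinal Hl, Ordinal Hj))
     (Pp_lt (Ordinal (isT : 1 < 4), Ordinal Hj)) (Pp_lt (Ordinal (isT : 1 < 4), prv (Ordinal Hj))) (isT : 0 < 1)
     (or_introl Ea)
     (Pp_bprv (Ordinal Hj) (erefl : val (Ordinal Hl) = 0) (erefl : val (Ordinal (isT : 1 < 4)) = 1)) Hc.
    apply: (@bump1 _ _ _ (Ordinal (isT : 1 < 4), Ordinal Hj)) => //; first by rewrite adj_sym; apply: adj_up.
    by move: E; rewrite /Aa /Hh /absd /=; gen_c2; lia.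
  apply: (@bump1 _ _ _ (Ordinal (isT : 1 < 4), prv (Ordinal Hj))) => //; first by apply: adj_ba.
  by move: E; rewrite /Aa /Hh /absd /=; gen_c2; lia.
-
  have E : Pp (Ordinal (isT : 2 < 4), Ordinal Hj) = Pp (Ordinal Hl, Ordinal Hj) by apply: Pp_same.
  apply: (@bump1 _ _ _ (Ordinal (isT : 2 < 4), Ordinal Hj)) => //; first by rewrite adj_sym; apply: adj_up.
  by rewrite /Aa E /Hh /absd /=; gen_c2; lia.
-
  have E : Pp (Ordinal (isT : 3 < 4), Ordinal Hj) = Pp (Ordinal Hl, Ordinal Hj) by apply: Pp_same.
  apply: (@bump1 _ _ _ (Ordinal (isT : 3 < 4), Ordinal Hj)) => //; first by rewrite adj_sym; apply: adj_up.
  by rewrite /Aa E /Hh /absd /=; gen_c2; lia.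
-
  have E : Pp (Ordinal (isT : 2 < 4), Ordinal Hj) = Pp (Ordinal Hl, Ordinal Hj) by apply: Pp_same.
  apply: (@bump1 _ _ _ (Ordinal (isT : 2 < 4), Ordinal Hj)) => //; first by rewrite adj_sym; apply: adj_up.
  by rewrite /Aa E /Hh /absd /=; gen_c2; lia.
-
  have E : Pp (Ordinal (isT : 3 < 4), Ordinal Hj) = Pp (Ordinal Hl, Ordinal Hj) by apply: Pp_same.
  apply: (@bump1 _ _ _ (Ordinal (isT : 3 < 4), Ordinal Hj)) => //; first by rewrite adj_sym; apply: adj_up.
  by rewrite /Aa E /Hh /absd /=; gen_c2; lia.
-
  have E : Pp (Ordinal (isT : 3 < 4), Ordinal Hj) = Pp (Ordinal Hl, Ordinal Hj) by apply: Pp_same.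
  apply: (@bump1 _ _ _ (Ordinal (isT : 3 < 4), Ordinal Hj)) => //; first by rewrite adj_sym; apply: adj_up.
  by rewrite /Aa E /Hh /absd /=; gen_c2; lia.
Qed.

Lemma cover_even n (p q : Sn_vert n) : 3 <= n -> ~~ odd n -> MMD (@Sn_adj n) p q ->
  ~~ bad p \/ ~~ bad q.
Proof.
move=> Hn Ho HM.
case: (boolP (bad p)) => Hp; last by left.
case: (boolP (bad q)) => Hq; last by right.
have Hpq : p != q by case: HM.
exfalso; case: (leqP (Hh p.1) (Hh q.1)) => H.
  exact: (key_even Hn Ho Hp Hq Hpq H HM).
exact: (key_even Hn Ho Hq Hp (ltac:(by rewrite eq_sym)) (ltnW H) (MMD_sym (metric_Sn Hn) HM)).
Qed.

Lemma adj_H n (z v : Sn_vert n) : 3 <= n -> Sn_adj z v -> absd (Hh z.1) (Hh v.1) <= 2.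
Proof.
move=> Hn; case/orP => H.
  by have := step_raw Hn H; lia.
by have := step_raw Hn H; rewrite absd_sym c2_sym; lia.
Qed.

Lemma MMD_of n (x y : Sn_vert n) : 3 <= n -> x != y ->
  (forall z : Sn_vert n, absd (Hh z.1) (Hh y.1) <= 2 -> Aa x z <= Aa x y) ->
  (forall z : Sn_vert n, absd (Hh z.1) (Hh x.1) <= 2 -> Aa y z <= Aa x y) ->
  MMD (@Sn_adj n) x y.
Proof.
move=> Hn Hxy H1 H2; split=> //; split=> z Hz; rewrite !gdist_Sn //.
  by have := H1 z (adj_H Hn Hz); rewrite !A_even //; lia.
by have := H2 z (adj_H Hn Hz); rewrite !A_even //; lia.
Qed.

Lemma modD_cases n t m : t < n -> m < n ->
  ((t + m) %% n = t + m /\ t + m < n) \/ ((t + m) %% n + n = t + m /\ n <= t + m).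
Proof.
move=> Ht Hm; case: (ltnP (t + m) n) => H; first by left; rewrite modn_small.
right; split=> //; rewrite -{2}(subnK H) -[in LHS](subnK H) modnDr modn_small //; lia.
Qed.

Lemma half_le n : n./2 <= n.
Proof. have := odd_double_half n; rewrite -muln2; lia. Qed.

Lemma half_lt n : 0 < n -> n./2 < n.
Proof. have := odd_double_half n; rewrite -muln2; case: (odd n) => /=; lia. Qed.

Definition sgm n (t : 'I_n) : 'I_n := Ordinal (ltn_pmod (t + n./2) (ord_pos t)).

Lemma sgm_inj n : injective (@sgm n).
Proof.
move=> a b /(congr1 val) /= /eqP; rewrite eqn_modDr !modn_small ?ltn_ord // => /eqP H.
exact: val_inj.
Qed.

Definition ord3 : 'I_4 := Ordinal (isT : 3 < 4).
Definition ord1' : 'I_4 := Ordinal (isT : 1 < 4).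

Lemma Pp_a n (i : 'I_n) : Pp (ord0 : 'I_4, i) = 2 * val i.
Proof. by rewrite /Pp /= addn0. Qed.
Lemma Pp_nz n (k : 'I_4) (i : 'I_n) : val k != 0 -> Pp (k, i) = 2 * val i + 1.
Proof. by rewrite /Pp /= => ->. Qed.

Lemma odd_case n : 3 <= n -> odd n -> sdim (@Sn_adj n) = n.
Proof.
move=> Hn Ho.
have HM := metric_Sn Hn.
have Hm := odd_double_half n; rewrite Ho -muln2 /= in Hm.
pose S0 := (fun i : 'I_n => (ord0 : 'I_4, i)) @: [set: 'I_n].
apply: (@sdim_eq _ _ S0 n (fun t => (ord0 : 'I_4, t)) (fun t => (ord3, sgm t))) => //.
- apply: srs_of_cover => // x y Hxy; case: (cover_odd Hn Ho Hxy) => H; [left|right];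
    apply/imsetP; [exists x.2|exists y.2] => //; [case: x H Hxy|case: y H Hxy] => k i /= H _;
    congr pair; exact: val_inj.
- by rewrite card_imset ?cardsT ?card_ord // => a b [].
- by move=> a b [].
- by move=> a b E; apply: (@sgm_inj n); exact: (congr1 snd E).
- move=> t.
  have Ec : c2 (2*n) (Pp (ord0 : 'I_4, t)) (Pp (ord3, sgm t)) = n.
    rewrite Pp_a Pp_nz // /sgm /=; case: t => t Ht /=.
    have := half_lt (ltnW (ltnW Hn)).
    move=> Hh2; case: (modD_cases Ht Hh2) => [[-> ?]|[E ?]]; rewrite /c2 /absd; lia.
  apply: MMD_of => //.
  + move=> z _; rewrite /Aa Ec; have := c2_le (2*n) (Pp (ord0 : 'I_4, t)) (Pp z).
    have -> : Hh (ord0 : 'I_4, t).1 = 1 by []. have -> : Hh (ord3, sgm t).1 = 6 by [].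
    move: (Hh z.1) (Hh_bd z.1) => h Hb; gen_c2; rewrite /absd; lia.
  + move=> z _; rewrite /Aa Ec; have := c2_le (2*n) (Pp (ord3, sgm t)) (Pp z).
    have -> : Hh (ord0 : 'I_4, t).1 = 1 by []. have -> : Hh (ord3, sgm t).1 = 6 by [].
    move: (Hh z.1) (Hh_bd z.1) => h Hb; gen_c2; rewrite /absd; lia.
Qed.

Definition lowA n (a : 'I_(n./2)) : 'I_n := Ordinal (leq_trans (ltn_ord a) (half_le n)).
Definition hiA n (a : 'I_(n./2)) : 'I_n := Ordinal (ltn_pmod (a + n./2) (ord_pos (lowA a))).

Definition xe' n (t : 'I_(n./2) + 'I_n) : Sn_vert n :=
  match t with inl a => (ord0, lowA a) | inr b => (ord1', b) end.
Definition ye' n (t : 'I_(n./2) + 'I_n) : Sn_vert n :=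
  match t with inl a => (ord0, hiA a) | inr b => (ord3, sgm b) end.
Definition s0' n (t : 'I_(n./2) + 'I_n) : Sn_vert n :=
  match t with inl a => (ord0, lowA a) | inr b => (ord3, b) end.

Lemma hiA_val n (a : 'I_(n./2)) : ~~ odd n -> val (hiA a) = val a + n./2.
Proof.
move=> Ho; have := odd_double_half n; rewrite (negbTE Ho) -muln2 /= => Hm.
rewrite /hiA /= modn_small //; have := ltn_ord a; lia.
Qed.

Lemma xe'_inj n : injective (@xe' n).
Proof.
move=> [a|b] [a'|b'] //= E; move: (congr1 snd E) (congr1 (fun u => val u.1) E) => //= E2 E1.
- by congr inl; apply: val_inj; move: (congr1 val E2).
- by congr inr.
Qed.

Lemma ye'_inj n : ~~ odd n -> injective (@ye' n).
Proof.
move=> Ho [a|b] [a'|b'] //= E; move: (congr1 snd E) (congr1 (fun u => val u.1) E) => //= E2 E1.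
- congr inl; apply: val_inj; move: (congr1 val E2); rewrite !hiA_val //; lia.
- by congr inr; apply: (@sgm_inj n).
Qed.

Lemma s0'_inj n : injective (@s0' n).
Proof.
move=> [a|b] [a'|b'] //= E; move: (congr1 snd E) (congr1 (fun u => val u.1) E) => //= E2 E1.
- by congr inl; apply: val_inj; move: (congr1 val E2).
- by congr inr.
Qed.

Lemma even_case n : 3 <= n -> ~~ odd n -> sdim (@Sn_adj n) = n./2 + n.
Proof.
move=> Hn Ho.
have HM := metric_Sn Hn.
have Hm := odd_double_half n; rewrite (negbTE Ho) -muln2 /= in Hm.
pose S0 := (fun t : 'I_(n./2 + n) => s0' (split t)) @: [set: 'I_(n./2 + n)].
apply: (@sdim_eq _ _ S0 (n./2 + n) (fun t => xe' (split t)) (fun t => ye' (split t))) => //.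
- apply: srs_of_cover => // x y Hxy.
  suff HS : forall p : Sn_vert n, ~~ bad p -> p \in S0.
    by case: (cover_even Hn Ho Hxy) => H; [left|right]; apply: HS.
  case=> [[[|[|[|[|k]]]] Hk] [i Hi]]; rewrite /bad //= => H.
  + rewrite -ltnNge in H; apply/imsetP; exists (unsplit (inl (Ordinal H))) => //; rewrite unsplitK /=.
    by congr pair; [apply: val_inj|apply: val_inj].
  + apply/imsetP; exists (unsplit (inr (Ordinal Hi))) => //; rewrite unsplitK /=.
    by congr pair; apply: val_inj.
- rewrite card_imset ?cardsT ?card_ord //.
  exact: inj_comp (@s0'_inj n) (can_inj splitK).
- exact: inj_comp (@xe'_inj n) (can_inj splitK).
- exact: inj_comp (ye'_inj Ho) (can_inj splitK).
- move=> t s; case: (split t) => [a|b]; case: (split s) => [a'|b'] //=.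
  rewrite xpair_eqE eqxx /= -val_eqE hiA_val //=; have := ltn_ord a; lia.
- move=> t; case: (split t) => [a|b] /=.
  + have Ec : c2 (2*n) (Pp (ord0 : 'I_4, lowA a)) (Pp (ord0 : 'I_4, hiA a)) = n.
      rewrite !Pp_a hiA_val //= /c2 /absd; have := ltn_ord a; lia.
    apply: MMD_of => //.
    * rewrite xpair_eqE eqxx /= -val_eqE hiA_val //=; lia.
    * move=> [[[|[|[|[|k]]]] Hk] j]; rewrite /Aa Ec /Hh /absd /= => Hb; try lia.
        have := c2_le (2*n) (Pp (ord0 : 'I_4, lowA a)) (Pp (Ordinal Hk, j)); gen_c2; lia.
      have := @c2_even_lt n (ord0 : 'I_4, lowA a) (Ordinal Hk, j) Ho (erefl _) isT; gen_c2; lia.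
    * move=> [[[|[|[|[|k]]]] Hk] j]; rewrite /Aa Ec /Hh /absd /= => Hb; try lia.
        have := c2_le (2*n) (Pp (ord0 : 'I_4, hiA a)) (Pp (Ordinal Hk, j)); gen_c2; lia.
      have := @c2_even_lt n (ord0 : 'I_4, hiA a) (Ordinal Hk, j) Ho (erefl _) isT; gen_c2; lia.
  + have Ec : c2 (2*n) (Pp (ord1', b)) (Pp (ord3, sgm b)) = n.
      rewrite !Pp_nz // /sgm /=; case: b => bb Hbb /=.
      have := half_lt (ltnW (ltnW Hn)).
      move=> Hh2; case: (modD_cases Hbb Hh2) => [[-> ?]|[E ?]]; rewrite /c2 /absd; lia.
    apply: MMD_of => //.
    * move=> [[[|[|[|[|k]]]] Hk] j]; rewrite /Aa Ec /Hh /absd /= => Hb; try lia;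
        have := c2_le (2*n) (Pp (ord1', b)) (Pp (Ordinal Hk, j)); gen_c2; lia.
    * move=> [[[|[|[|[|k]]]] Hk] j]; rewrite /Aa Ec /Hh /absd /= => Hb; try lia;
        try (have := c2_le (2*n) (Pp (ord3, sgm b)) (Pp (Ordinal Hk, j)); gen_c2; lia).
      have := @c2_even_lt n (Ordinal Hk, j) (ord3, sgm b) Ho (erefl _) isT; rewrite c2_sym; gen_c2; lia.
Qed.

Theorem theorem3p2 (n : nat) : 3 <= n ->
  sdim (@Sn_adj n) = (if odd n then n else (3 * n) %/ 2).
Proof.
move=> Hn; case: (boolP (odd n)) => Ho.
  exact: odd_case.
rewrite even_case //; have := odd_double_half n; rewrite (negbTE Ho) -muln2 /=.
move: n./2 => m; lia.
Qed.
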